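(* Let $G$ be a topological group, $A$ a topological $G$-module and $f\in C_c^n(G,A)$ a continuous homogeneous group $n$-cocycle (i.e. $df=0$). Then $j_v^n(f)$ and $j_h^n(i^n(f))$ are cohomologous in $\mathrm{Tot}\,A_{lc}^{*,*}(G,A)^G$, where $i^n\colon C_c^n(G,A)\hookrightarrow C_{lc}^n(G,A)$ is the inclusion.
   Context: A topological $G$-module is an abelian topological group $A$ with an action of $G$ by group automorphisms such that $G\times A\to A$ is continuous. For an identity neighbourhood $U$ of $G$ put $\Gamma_U^0:=G$ and, for $q\ge1$, $\Gamma_U^q:=\{(g_0,\dots,g_q)\in G^{q+1}\mid g_i^{-1}g_j\in U\ \forall i,j\}$. $G$ acts on maps $f\colon G^{n+1}\to A$ by $(g.f)(g_0,\dots,g_n)=g.f(g^{-1}g_0,\dots,g^{-1}g_n)$, and $df(g_0,\dots,g_{n+1})=\sum_i(-1)^if(g_0,\dots,\widehat{g_i},\dots,g_{n+1})$. $C_c^n(G,A)$ consists of continuous equivariant maps $G^{n+1}\to A$; $C_{lc}^n(G,A)$ of equivariant maps whose restriction to $\Gamma_U^n$ is continuous for some identity neighbourhood $U$. $A_{lc}^{p,q}(G,A)$ is the group of maps $f\colon G^{p+1}\times G^{q+1}\to A$ whose restriction to $G^{p+1}\times\Gamma_U^q$ is continuous for some identity neighbourhood $U$, with $d_hf(x_0,\dots,x_{p+1},\vec y)=\sum_i(-1)^if(x_0,\dots,\widehat{x_i},\dots,x_{p+1},\vec y)$ and $d_vf(\vec x,y_0,\dots,y_{q+1})=(-1)^p\sum_i(-1)^if(\vec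 x,y_0,\dots,\widehat{y_i},\dots,y_{q+1})$. $G$ acts by $(g.f)(\vec x,\vec y)=g.f(g^{-1}\vec x,g^{-1}\vec y)$, and $\mathrm{Tot}\,A_{lc}^{*,*}(G,A)^G$ is the total complex of the fixed-point double complex, $\mathrm{Tot}^n=\bigoplus_{p+q=n}A_{lc}^{p,q}(G,A)^G$ with differential $d_h+d_v$. The maps $j_h^n\colon C_{lc}^n(G,A)\to A_{lc}^{0,n}(G,A)^G$, $j_h(f)(x_0,\vec y)=f(\vec y)$, and $j_v^n\colon C_c^n(G,A)\to A_{lc}^{n,0}(G,A)^G$, $j_v(f)(\vec x,y_0)=f(\vec x)$, are chain maps into the total complex. *)

(* Defs.v *)
From HB Require Import structures.
From mathcomp Require Import all_boot all_order all_algebra.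
From mathcomp Require Import all_classical all_reals topology tvs.
Set Implicit Arguments. Unset Strict Implicit. Unset Printing Implicit Defensive.
Import GRing.Theory.
Local Open Scope classical_set_scope.
Local Open Scope ring_scope.

Definition is_topological_group (G : topologicalType)
  (mul : G -> G -> G) (inv : G -> G) (one : G) : Prop :=
  [/\ (forall x y z, mul x (mul y z) = mul (mul x y) z),
      (forall x, mul one x = x /\ mul x one = x),
      (forall x, mul (inv x) x = one /\ mul x (inv x) = one),
      continuous (fun xy : G * G => mul xy.1 xy.2)
    & continuous inv].

Definition is_topological_Gmodule (G : topologicalType)
  (mul : G -> G -> G) (one : G) (A : topologicalZmodType) (act : G -> A -> A)
  : Prop :=
  [/\ (forall g a b, act g (a + b) = act g a + act g b),
      (forall a, act one a = a),
      (forall g h a, act (mul g h) a = act g (act h a))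
    & continuous (fun ga : G * A => act ga.1 ga.2)].

Section Cochains.
Variables (G : topologicalType) (mul : G -> G -> G) (inv : G -> G) (one : G).
Variables (A : topologicalZmodType) (act : G -> A -> A).

Local Notation Gp n := {ptws 'I_n -> G}.

Definition sgnv (i : nat) (v : A) : A := if odd i then - v else v.

Definition face n (i : 'I_n.+2) (x : 'I_n.+2 -> G) : 'I_n.+1 -> G :=
  fun j => x (lift i j).

Definition ltr n (g : G) (x : 'I_n -> G) : 'I_n -> G := fun i => mul (inv g) (x i).

Definition dC n (f : ('I_n.+1 -> G) -> A) : ('I_n.+2 -> G) -> A :=
  fun x => \sum_(i < n.+2) sgnv i (f (face i x)).

Definition equivariant n (f : ('I_n -> G) -> A) : Prop :=
  forall g x, act g (f (ltr g x)) = f x.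

Definition Cc n (f : ('I_n.+1 -> G) -> A) : Prop :=
  continuous (f : Gp n.+1 -> A) /\ equivariant f.

Definition GammaU (U : set G) q : set ('I_q.+1 -> G) :=
  [set y | q = 0%N \/ forall i j, U (mul (inv (y i)) (y j))].

Definition dcochain p q := ('I_p.+1 -> G) -> ('I_q.+1 -> G) -> A.

Definition Alc p q (f : dcochain p q) : Prop :=
  exists U : set G, nbhs one U /\
    {within [set xy : Gp p.+1 * Gp q.+1 | GammaU U xy.2],
       continuous (fun xy => f xy.1 xy.2)}.

Definition dinvariant p q (f : dcochain p q) : Prop :=
  forall g x y, act g (f (ltr g x) (ltr g y)) = f x y.

Definition AlcG p q (f : dcochain p q) : Prop := Alc f /\ dinvariant f.

Definition d_h p q (f : dcochain p q) : dcochain p.+1 q :=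
  fun x y => \sum_(i < p.+2) sgnv i (f (face i x) y).

Definition d_v p q (f : dcochain p q) : dcochain p q.+1 :=
  fun x y => sgnv p (\sum_(i < q.+2) sgnv i (f x (face i y))).

(* components of j_v^n(f) and j_h^n(f) in bidegree (p,q) of Tot^n
   (zero outside bidegree (n,0), resp. (0,n)) *)
Definition jv n (f : ('I_n.+1 -> G) -> A) p q : dcochain p q :=
  fun x y => if (p == n) && (q == 0%N) then f (fun i => x (inord i)) else 0.

Definition jh n (f : ('I_n.+1 -> G) -> A) p q : dcochain p q :=
  fun x y => if (p == 0%N) && (q == n) then f (fun i => y (inord i)) else 0.

Definition totd (b : forall p q, dcochain p q) p q : dcochain p q :=
  fun x y =>
    (match p as p0 return dcochain p0 q with
     | 0%N => fun _ _ => 0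
     | p'.+1 => d_h (b p' q) end) x y +
    (match q as q0 return dcochain p q0 with
     | 0%N => fun _ _ => 0
     | q'.+1 => d_v (b p q') end) x y.

Definition tot_cohomologous n (c1 c2 : forall p q, dcochain p q) : Prop :=
  exists b : forall p q, dcochain p q,
    (forall p q, (p + q).+1 = n -> AlcG (b p q)) /\
    (forall p q, p + q = n -> forall x y,
        c1 p q x y - c2 p q x y = totd b x y).

End Cochains.

(* Main.v *)
Require Import Defs.
From HB Require Import structures.
From mathcomp Require Import all_boot all_order all_algebra.
From mathcomp Require Import all_classical all_reals topology tvs.
From mathcomp Require Import zify.
From Stdlib Require Import Lia.
Local Open Scope classical_set_scope.
Local Open Scope ring_scope.
Import GRing.Theory.
Set Implicit Arguments. Unset Strict Implicit.

Section Alg.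
Variables (G : topologicalType) (A : topologicalZmodType).

Lemma sgnvS k (v : A) : sgnv k.+1 v = - sgnv k v.
Proof. by rewrite /sgnv /=; case: (odd k); rewrite ?opprK. Qed.
Lemma sgnv0 (v : A) : sgnv 0 v = v. Proof. by []. Qed.
Lemma sgnvN k (v : A) : sgnv k (- v) = - sgnv k v.
Proof. by rewrite /sgnv; case: (odd k). Qed.
Lemma sgnvDv k (u v : A) : sgnv k (u + v) = sgnv k u + sgnv k v.
Proof. by rewrite /sgnv; case: (odd k); rewrite ?opprD. Qed.
Lemma sgnvD a b (v : A) : sgnv (a + b) v = sgnv a (sgnv b v).
Proof. elim: a => [|a IH] //; by rewrite addSn !sgnvS IH. Qed.
Lemma sgnvK k (v : A) : sgnv k (sgnv k v) = v.
Proof. by rewrite /sgnv; case: (odd k); rewrite ?opprK. Qed.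
Lemma sgnv_sum k m (F : nat -> A) :
  sgnv k (\sum_(0 <= i < m) F i) = \sum_(0 <= i < m) sgnv k (F i).
Proof. by rewrite /sgnv; case: (odd k); rewrite ?sumrN. Qed.

Definition catf p q (x : 'I_p.+1 -> G) (y : 'I_q.+1 -> G) : nat -> G :=
  fun k => if (k < p.+1)%N then x (inord k) else y (inord (k - p.+1)).

Definition bco n (f : ('I_n.+1 -> G) -> A) p q : dcochain G A p q :=
  fun x y => if (p + q).+1 == n then sgnv p.+1 (f (fun i : 'I_n.+1 => catf x y i))
             else 0.

Lemma Fext n (f : ('I_n.+1 -> G) -> A) (Z1 Z2 : nat -> G) :
  (forall k, (k < n.+1)%N -> Z1 k = Z2 k) ->
  f (fun i : 'I_n.+1 => Z1 i) = f (fun i : 'I_n.+1 => Z2 i).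
Proof.
move=> h; congr f; apply: functional_extensionality_dep => i; exact: h.
Qed.

Lemma cocycle_nat n (f : ('I_n.+1 -> G) -> A) (Z : nat -> G) :
  (forall x, dC f x = 0) ->
  \sum_(0 <= k < n.+2) sgnv k (f (fun i : 'I_n.+1 => Z (bump k i))) = 0.
Proof.
move=> hc; rewrite big_mkord; have := hc (fun i : 'I_n.+2 => Z i).
by rewrite /dC.
Qed.

Lemma catf_face_x p q (x : 'I_p.+2 -> G) (y : 'I_q.+1 -> G) (i : 'I_p.+2) k :
  catf (face i x) y k = catf x y (bump i k).
Proof.
rewrite /catf /face /bump.
have hi := ltn_ord i.
case: ltnP => hk.
  have -> : ((i <= k) + k < p.+2)%N by case: (i <= k)%N; rewrite /= ?add0n ?add1n; lia.
  congr x; apply: val_inj; rewrite /= inordK //= inordK //; case: (i <= k)%N; rewrite /= ?add0n ?add1n; lia.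
have -> : (i <= k)%N by lia.
have -> : (true + k < p.+2)%N = false by rewrite /= add1n; lia.
congr y; apply: val_inj; rewrite /= add1n.
Qed.

Lemma catf_face_y p q (x : 'I_p.+1 -> G) (y : 'I_q.+2 -> G) (i : 'I_q.+2) k :
  (k < p.+1 + q.+1)%N ->
  catf x (face i y) k = catf x y (bump (p.+1 + i) k).
Proof.
rewrite /catf /face /bump => hkn.
have hi := ltn_ord i.
case: ltnP => hk.
  have -> : (p.+1 + i <= k)%N = false by lia.
  by rewrite add0n hk.
have hle : (p.+1 <= (p.+1 + i <= k)%N + k)%N by case: (p.+1 + i <= k)%N; rewrite /= ?add0n ?add1n; lia.
rewrite ltnNge hle /=; congr y; apply: val_inj; rewrite /= inordK; last by lia.
rewrite inordK; last by case: (p.+1 + i <= k)%N; case: (i <= k - p.+1)%N; rewrite /= ?add0n ?add1n; lia.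
rewrite /bump; have [h1|h1] := leqP (p.+1 + i) k; have [h2|h2] := leqP i (k - p.+1); rewrite /= ?add0n ?add1n; lia.
Qed.
Definition S1 n (f : ('I_n.+1 -> G) -> A) p (Z : nat -> G) :=
  \sum_(0 <= i < p.+1) sgnv i (f (fun k : 'I_n.+1 => Z (bump i k))).
Definition S2 n (f : ('I_n.+1 -> G) -> A) p q (Z : nat -> G) :=
  \sum_(0 <= i < q.+1) sgnv i (f (fun k : 'I_n.+1 => Z (bump (p.+1 + i) k))).

Lemma sgnvC a b (v : A) : sgnv a (sgnv b v) = sgnv b (sgnv a v).
Proof. by rewrite -!sgnvD addnC. Qed.

Lemma coc_lemma p q (f : ('I_(p + q).+1 -> G) -> A) Z :
  (forall z, dC f z = 0) -> S1 f p Z + sgnv p.+1 (S2 f p q Z) = 0.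
Proof.
move=> hc; have := cocycle_nat Z hc.
rewrite (@big_cat_nat _ _ _ p.+1) //=; last by lia.
rewrite -{2}(add0n p.+1) big_addn.
have -> : ((p + q).+2 - p.+1 = q.+1)%N by lia.
rewrite /S1 /S2 sgnv_sum => h; apply: (etrans _ h); congr (_ + _); apply: eq_bigr => i _.
by rewrite [(i + p.+1)%N]addnC sgnvD.
Qed.

Lemma dh_lemma p q (f : ('I_(p.+1 + q).+1 -> G) -> A) (x : 'I_p.+2 -> G) (y : 'I_q.+1 -> G) :
  d_h (@bco _ f p q) x y = sgnv p.+1 (S1 f p.+1 (catf x y)).
Proof.
rewrite /d_h /bco; have -> : ((p+q).+1 == p.+1 + q) = true by rewrite -addSn eqxx.
rewrite /S1 sgnv_sum big_mkord; apply: eq_bigr => i _.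
rewrite /= sgnvC; congr (sgnv _ _); congr (sgnv _ _).
apply: (@Fext _ f (catf (face i x) y) (fun m => catf x y (bump i m))) => k _.
exact: catf_face_x.
Qed.

Lemma dv_lemma p q (f : ('I_(p + q.+1).+1 -> G) -> A) (x : 'I_p.+1 -> G) (y : 'I_q.+2 -> G) :
  d_v (@bco _ f p q) x y = - S2 f p q.+1 (catf x y).
Proof.
rewrite /d_v /bco; have -> : ((p+q).+1 == p + q.+1) = true by rewrite -addnS eqxx.
rewrite /S2.
have -> : \sum_(i < q.+2) sgnv i (sgnv p.+1 (f (fun i0 : 'I_(p + q.+1).+1 => catf x (face i y) i0)))
   = sgnv p.+1 (\sum_(0 <= i < q.+2) sgnv i (f (fun k : 'I_(p + q.+1).+1 => catf x y (bump (p.+1 + i) k)))).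
  rewrite sgnv_sum big_mkord; apply: eq_bigr => i _.
  rewrite /= sgnvC; congr (sgnv _ _); congr (sgnv _ _); apply: (@Fext _ f (catf x (face i y)) (fun m => catf x y (bump (p.+1 + i) m))) => k hk.
  apply: catf_face_y; lia.
by rewrite sgnvS sgnvN sgnvK.
Qed.

Lemma hjv p (f : ('I_(p + 0).+1 -> G) -> A) (x : 'I_p.+1 -> G) (y : 'I_1 -> G) :
  f (fun i => x (inord i)) = S2 f p 0 (catf x y).
Proof.
rewrite /S2 big_nat1 sgnv0; apply: (@Fext _ f (fun m => x (inord m)) (fun m => catf x y (bump (p.+1 + 0) m))) => k hk.
rewrite /catf /bump; have -> : (p.+1 + 0 <= k)%N = false by lia.
by rewrite add0n; have -> : (k < p.+1)%N by lia.
Qed.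

Lemma hjh q (f : ('I_(0 + q).+1 -> G) -> A) (x : 'I_1 -> G) (y : 'I_q.+1 -> G) :
  f (fun i => y (inord i)) = S1 f 0 (catf x y).
Proof.
rewrite /S1 big_nat1 sgnv0; apply: (@Fext _ f (fun m => y (inord m)) (fun m => catf x y (bump 0 m))) => k hk.
by rewrite /catf /bump leq0n add1n ltnS /= subSS subn0.
Qed.
Lemma key n (f : ('I_n.+1 -> G) -> A) p q (x : 'I_p.+1 -> G) (y : 'I_q.+1 -> G) :
 (forall z, dC f z = 0) -> (p + q)%N = n ->
 jv f x y - jh f x y = totd (fun p q => @bco n f p q) x y.
Proof.
move=> hc hpq; subst n.
have hcoc := coc_lemma (catf x y) hc.
case: p x f hc hcoc => [|p] x f hc hcoc; case: q y f hc hcoc => [|q] y f hc hcoc.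
- rewrite /jv /jh /totd /= (hjv f x y) (hjh f x y) addr0.
  by rewrite sgnvS sgnv0 in hcoc; apply/eqP; rewrite subr_eq0 eq_sym -subr_eq0 hcoc.
- rewrite /jv /jh /totd /=.
  have -> : (q.+1 == (0 + q.+1)%N) = true by rewrite add0n eqxx.
  rewrite (hjh f x y) (dv_lemma f x y) add0r sub0r.
  have e : S1 f 0 (catf x y) = - sgnv 1 (S2 f 0 q.+1 (catf x y)).
    by apply/eqP; rewrite -subr_eq0 opprK hcoc.
  by rewrite e sgnvS sgnv0 opprK.
- rewrite /jv /jh /totd /=.
  have -> : (p.+1 == (p.+1 + 0)%N) = true by rewrite addn0 eqxx.
  rewrite /= (hjv f x y) (dh_lemma f x y) addr0 subr0.
  have e : S1 f p.+1 (catf x y) = - sgnv p.+2 (S2 f p.+1 0 (catf x y)).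
    by apply/eqP; rewrite -subr_eq0 opprK hcoc.
  by rewrite e [sgnv p.+2 _]sgnvS opprK sgnvK.
- rewrite /jv /jh /totd /=.
  have -> : (p.+1 == (p.+1 + q.+1)%N) = false by apply/negbTE; rewrite addnS; lia.
  rewrite /= (dh_lemma f x y) (dv_lemma f x y) subr0.
  have e : S1 f p.+1 (catf x y) = - sgnv p.+2 (S2 f p.+1 q.+1 (catf x y)).
    by apply/eqP; rewrite -subr_eq0 opprK hcoc.
  by rewrite e [sgnv p.+2 _]sgnvS opprK sgnvK subrr.
Qed.

End Alg.

Lemma ptws_cont (X : topologicalType) (I : Type) (G : topologicalType)
  (h : X -> {ptws I -> G}) :
  (forall i, continuous (fun x => h x i)) -> continuous h.
Proof.
move=> hc x; apply/cvg_sup.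

move=> i; move: x.
apply/(@continuousP _ (initial_topology (fun f : (I -> G) => f i))) => A [B oB <-].
exact: (open_comp (fun x _ => hc i x)).
Qed.

Lemma sgnv_cont (A : topologicalZmodType) k : continuous (@sgnv A k).
Proof.
rewrite /sgnv; case: (odd k); first exact: opp_continuous.
by move=> x.
Qed.

Theorem mainTheorem4 (G : topologicalType) (mul : G -> G -> G) (inv : G -> G)
  (one : G) (A : topologicalZmodType) (act : G -> A -> A) (n : nat)
  (f : ('I_n.+1 -> G) -> A) :
  is_topological_group mul inv one ->
  is_topological_Gmodule mul one act ->
  Cc mul inv act f ->
  (forall x, dC f x = 0) ->
  tot_cohomologous mul inv one act n (jv f) (jh f).
Proof.
move=> _ [hadd _ _ _] [fcont feq] hc.
have act0 g : act g 0 = 0.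
  have h := hadd g 0 0; rewrite addr0 in h.
  by apply: (addrI (act g 0)); rewrite addr0 -h.
have actN g v : act g (- v) = - act g v.
  by apply/eqP; rewrite -subr_eq0 opprK -hadd addNr act0.
have actS g k v : act g (sgnv k v) = sgnv k (act g v).
  by rewrite /sgnv; case: (odd k); rewrite ?actN.
exists (fun p q => @bco G A n f p q); split; last first.
  by move=> p q hpq x y; apply: key.
move=> p q _; split.
  exists setT; split; first exact: filterT.
  apply: continuous_subspaceT.
  rewrite /bco; case: eqP => _; last by move=> xy; exact: cst_continuous.
  have h1 : continuous (fun xy : {ptws 'I_p.+1 -> G} * {ptws 'I_q.+1 -> G} =>
              ((fun i : 'I_n.+1 => catf xy.1 xy.2 i) : {ptws 'I_n.+1 -> G})).
    apply: ptws_cont => i; rewrite /catf; case: (_ < _)%N => xy.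
      apply: (@continuous_comp _ _ _ fst (fun h : {ptws 'I_p.+1 -> G} => h (inord i)) xy).
        exact: cvg_fst.
      exact: (@proj_continuous _ (fun _ => G) (inord i)).
    apply: (@continuous_comp _ _ _ snd (fun h : {ptws 'I_q.+1 -> G} => h (inord (i - p.+1))) xy).
      exact: cvg_snd.
    exact: (@proj_continuous _ (fun _ => G) (inord (i - p.+1))).
  move=> xy; apply: (continuous_comp (f := fun xy : {ptws 'I_p.+1 -> G} * {ptws 'I_q.+1 -> G} =>
              f (fun i : 'I_n.+1 => catf xy.1 xy.2 i))); last exact: sgnv_cont.
  apply: (continuous_comp (h1 xy)); exact: fcont.
move=> g x y; rewrite /bco; case: eqP => _; last exact: act0.
rewrite actS; congr sgnv; rewrite -[RHS](feq g); congr (act g (f _)).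
apply: functional_extensionality_dep => i; rewrite /catf /ltr.
by case: ifP.
Qed.
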